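(* For every pairwise spanner instance on a directed graph with uniform edge lengths and $k$ terminal pairs, there exists a junction tree solution whose cost is $O(\sqrt{k})\cdot\mathsf{OPT}$.
   Context: Pairwise spanner problem: given a directed graph $G=(V,E)$ with $\ell(e)=1$ for all $e$, terminal pairs $(s_i,t_i)$, $i\in[k]$, and target distances $d_i$ with $d_G(s_i,t_i)\le d_i$, find $F\subseteq E$ of minimum cardinality such that $(V,F)$ contains an $s_i\leadsto t_i$ path with at most $d_i$ edges for every $i$; $\mathsf{OPT}$ is this minimum. A junction tree rooted at $r\in V$ is a subgraph $J$ of $G$ that is the union of an in-arborescence $A^{in}$ rooted at $r$ and an out-arborescence $A^{out}$ rooted at $r$. A terminal pair $(s_i,t_i)$ is connected by $J$ if $s_i\in A^{in}$, $t_i\in A^{out}$, and the $s_i\leadsto r$ path in $A^{in}$ plus the $r\leadsto t_i$ path in $A^{out}$ have at most $d_i$ edges in total. A junction tree solution is a finite collection of junction trees (possibly with different roots) such that every terminal pair is connected by at least one of them; its cost is $\sum_J|E(J)|$, i.e., edges belonging to several junction trees are counted with multiplicity. *)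

(* Defs.v *)
From Stdlib Require Export Reals.
From mathcomp Require Import all_boot.
Set Implicit Arguments. Unset Strict Implicit. Unset Printing Implicit Defensive.

Section Defs.
Variable V : finType.

(* A directed graph is an edge set E : {set V * V}; (u,v) is the edge u -> v.
   All edge lengths are 1, so path length = number of edges. *)
Definition erel (F : {set V * V}) : rel V := fun a b => (a, b) \in F.

Definition walk_le (F : {set V * V}) (x y : V) (n : nat) : Prop :=
  exists p : seq V, [/\ path (erel F) x p, last x p = y & size p <= n].

Definition spanner_feasible (E : {set V * V}) (k : nat)
  (s t : 'I_k -> V) (d : 'I_k -> nat) (F : {set V * V}) : Prop :=
  F \subset E /\ forall i, walk_le F (s i) (t i) (d i).

Definition verts (A : {set V * V}) (r : V) : {set V} :=
  r |: ([set e.1 | e in A] :|: [set e.2 | e in A]).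

Definition out_arborescence (A : {set V * V}) (r : V) : Prop :=
  [/\ forall e, e \in A -> e.2 != r,
      forall v, v \in verts A r -> v != r -> #|[set e in A | e.2 == v]| = 1
    & forall v, v \in verts A r -> exists n, walk_le A r v n].

Definition rev_edges (A : {set V * V}) : {set V * V} :=
  [set (e.2, e.1) | e in A].

Definition in_arborescence (A : {set V * V}) (r : V) : Prop :=
  out_arborescence (rev_edges A) r.

Record jtree := JTree { jroot : V; jin : {set V * V}; jout : {set V * V} }.

Definition is_junction_tree (E : {set V * V}) (J : jtree) : Prop :=
  [/\ jin J \subset E, jout J \subset E,
      in_arborescence (jin J) (jroot J) & out_arborescence (jout J) (jroot J)].

(* J connects (s,t) within distance d: s in A_in, t in A_out, and the
   s ~> r path in A_in plus the r ~> t path in A_out have <= d edges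
   (arborescences are acyclic, so these walks are the unique tree paths) *)
Definition jconnects (J : jtree) (s t : V) (d : nat) : Prop :=
  [/\ s \in verts (jin J) (jroot J), t \in verts (jout J) (jroot J) &
      exists a b, [/\ walk_le (jin J) s (jroot J) a,
                      walk_le (jout J) (jroot J) t b & a + b <= d]].

(* cost of a junction tree solution: edges counted with multiplicity over trees *)
Definition jcost (sol : seq jtree) : nat :=
  \sum_(J <- sol) #|jin J :|: jout J|.

Definition junction_solution (E : {set V * V}) (k : nat)
  (s t : 'I_k -> V) (d : 'I_k -> nat) (sol : seq jtree) : Prop :=
  (forall J, List.In J sol -> is_junction_tree E J) /\
  (forall i, exists J, List.In J sol /\ jconnects J (s i) (t i) (d i)).

End Defs.

(* Main.v *)
Require Import Defs.
From Stdlib Require Import Reals Classical Lra.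
From mathcomp Require Import all_boot zify.
Set Implicit Arguments. Unset Strict Implicit. Unset Printing Implicit Defensive.

Lemma walk_nil (V : finType) (G : {set V * V}) x n : walk_le G x x n.
Proof. by exists [::]. Qed.

Lemma walk_cons (V : finType) (G : {set V * V}) x z y n :
  (x, z) \in G -> walk_le G z y n -> walk_le G x y n.+1.
Proof.
move=> xz [p [pp lp sp]]; exists (z :: p); split => //=.
by rewrite /erel xz.
Qed.

Lemma walk_snoc (V : finType) (G : {set V * V}) x y z n :
  walk_le G x y n -> (y, z) \in G -> walk_le G x z n.+1.
Proof.
move=> [p [pp lp sp]] yz; exists (rcons p z); split.
- by rewrite rcons_path pp lp /erel yz.
- by rewrite last_rcons.
- by rewrite size_rcons.
Qed.

Lemma walk_mono (V : finType) (G : {set V * V}) x y n m :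
  n <= m -> walk_le G x y n -> walk_le G x y m.
Proof. by move=> nm [p [pp lp sp]]; exists p; split => //; apply: leq_trans nm. Qed.

Lemma walk_sub (V : finType) (G H : {set V * V}) x y n :
  G \subset H -> walk_le G x y n -> walk_le H x y n.
Proof.
move=> /subsetP GH [p [pp lp sp]]; exists p; split => //.
elim: p x pp {lp sp} => //= z p IH x /andP[xz pz].
by rewrite /erel (GH _ xz) IH.
Qed.

Lemma mem_rev_edges (V : finType) (A : {set V * V}) e :
  (e \in rev_edges A) = ((e.2, e.1) \in A).
Proof.
apply/imsetP/idP => [[f fA ->] | eA] /=; first by case: f fA.
by exists (e.2, e.1) => //; case: e eA.
Qed.

Lemma rev_edgesK (V : finType) (A : {set V * V}) : rev_edges (rev_edges A) = A.
Proof. by apply/setP => e; rewrite !mem_rev_edges; case: e. Qed.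

Lemma walk_rev (V : finType) (G : {set V * V}) x y n :
  walk_le G x y n -> walk_le (rev_edges G) y x n.
Proof.
move=> [p [pp <- sp]]; apply: (walk_mono sp).
elim: p x pp {sp} => [|z p IH] x /=; first by move=> _; exact: walk_nil.
move=> /andP[xz pz]; apply: walk_snoc (IH _ pz) _.
by rewrite mem_rev_edges.
Qed.

Lemma verts_rev (V : finType) (A : {set V * V}) r v :
  (v \in verts (rev_edges A) r) = (v \in verts A r).
Proof.
rewrite /verts !inE; congr (_ || _).
apply/orP/orP => -[/imsetP[e eA ->]|/imsetP[e eA ->]].
- by right; apply/imsetP; exists (e.2, e.1) => //; rewrite -mem_rev_edges.
- by left; apply/imsetP; exists (e.2, e.1) => //; rewrite -mem_rev_edges.
- by right; apply/imsetP; exists (e.2, e.1) => //; rewrite mem_rev_edges; case: e eA.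
- by left; apply/imsetP; exists (e.2, e.1) => //; rewrite mem_rev_edges; case: e eA.
Qed.

Fixpoint wle (V : finType) (G : {set V * V}) (n : nat) (x y : V) : bool :=
  if n is m.+1 then (x == y) || [exists z, ((x, z) \in G) && wle G m z y]
  else x == y.

Lemma wleP (V : finType) (G : {set V * V}) n x y :
  reflect (walk_le G x y n) (wle G n x y).
Proof.
elim: n x => [|n IH] x /=.
  apply: (iffP eqP) => [->|[p [pp lp sp]]]; first exact: walk_nil.
  by case: p pp lp sp.
apply: (iffP orP) => [[/eqP->|/existsP[z /andP[xz /IH wz]]]|[p [pp lp sp]]].
- exact: walk_nil.
- exact: walk_cons xz wz.
- case: p pp lp sp => [|z p] /=; first by move=> _ ->; left.
  move=> /andP[xz pz] lp sp; right; apply/existsP; exists z.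
  by rewrite -/(erel G x z) xz; apply/IH; exists p.
Qed.

Lemma dist_ex (V : finType) (G : {set V * V}) (r : V) :
  exists f : V -> bool * nat, forall x,
    ((f x).1 <-> exists n, walk_le G x r n) /\
    ((f x).1 -> walk_le G x r (f x).2 /\ forall n, walk_le G x r n -> (f x).2 <= n).
Proof.
have H : forall x : V, exists p : bool * nat,
    (p.1 <-> exists n, walk_le G x r n) /\
    (p.1 -> walk_le G x r p.2 /\ forall n, walk_le G x r n -> p.2 <= n).
  move=> x; case: (classic (exists n, walk_le G x r n)) => [ex|nex].
  - have ex' : exists n, wle G n x r by case: ex => n /wleP; exists n.
    exists (true, ex_minn ex'); case: ex_minnP => m /wleP hm hmin /=.
    by split => // _; split => // n /wleP; apply: hmin.
  - by exists (false, 0); split.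
exact: (fin_all_exists H).
Qed.

Lemma in_tree (V : finType) (G : {set V * V}) (r : V) :
  exists A : {set V * V}, [/\ A \subset G, in_arborescence A r &
    forall x a, walk_le G x r a -> x \in verts A r /\ walk_le A x r a].
Proof.
have [f hf] := dist_ex G r.
pose par x := odflt r [pick z | ((x, z) \in G) && (f z).1 && ((f z).2 < (f x).2)].
have Hpar : forall x, (f x).1 -> x != r ->
    [&& (x, par x) \in G, (f (par x)).1 & (f (par x)).2 < (f x).2].
  move=> x rx xr; rewrite /par; case: pickP => [z /andP[/andP[-> ->] ->] //| none].
  exfalso.
  have [[p [pp lp sp]] _] := (hf x).2 rx.
  case: p pp lp sp => [|z p] /=; first by move=> _ lp; rewrite lp eqxx in xr.
  move=> /andP[xz pz] lp sp.
  have wz : walk_le G z r (size p) by exists p.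
  have rz : (f z).1 by apply/(hf z).1; exists (size p).
  have := none z; rewrite -/(erel G x z) xz rz /=.
  have := ((hf z).2 rz).2 _ wz.
  by move=> h1 /negP; apply; apply: leq_ltn_trans h1 sp.
pose A := [set e : V * V | [&& (f e.1).1, e.1 != r & e.2 == par e.1]].
have AG : A \subset G.
  apply/subsetP => -[a b]; rewrite inE /= => /and3P[ra ar /eqP ->].
  by have/and3P[] := Hpar a ra ar.
have walkA : forall m x, (f x).2 <= m -> (f x).1 -> walk_le A x r (f x).2.
  elim=> [|m IH] x dm rx.
    case: (eqVneq x r) => [->|xr]; first exact: walk_nil.
    by have/and3P[_ _] := Hpar x rx xr; rewrite ltnNge (leq_trans dm).
  case: (eqVneq x r) => [->|xr]; first exact: walk_nil.
  have/and3P[_ rp dp] := Hpar x rx xr.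
  have w := IH (par x) (leq_trans dp dm) rp.
  apply: (walk_mono dp); apply: walk_cons w.
  by rewrite inE /= rx xr eqxx.
have vertsA : forall x, (f x).1 -> x \in verts A r.
  move=> x rx; case: (eqVneq x r) => [->|xr]; first by rewrite /verts setU11.
  rewrite /verts !inE; apply/orP; right; apply/orP; left.
  by apply/imsetP; exists (x, par x) => //; rewrite inE /= rx xr eqxx.
have reachV : forall v, v \in verts A r -> v != r -> (f v).1.
  move=> v; rewrite /verts !inE => /orP[/eqP->|]; first by rewrite eqxx.
  move=> /orP[/imsetP[e eA ->]|/imsetP[e eA ->]] _;
    move: eA; rewrite inE => /and3P[re er /eqP e2] //.
  by rewrite e2; have/and3P[] := Hpar _ re er.
exists A; split => //; last first.
  move=> x a wx; have rx : (f x).1 by apply/(hf x).1; exists a.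
  split; first exact: vertsA.
  apply: (walk_mono (((hf x).2 rx).2 _ wx)).
  exact: walkA (leqnn _) rx.
split.
- by move=> e; rewrite mem_rev_edges inE /= => /and3P[].
- move=> v; rewrite verts_rev => vV vr; have rv := reachV v vV vr.
  suff -> : [set e in rev_edges A | e.2 == v] = [set (par v, v)] by rewrite cards1.
  apply/setP => -[a b]; rewrite !inE mem_rev_edges inE /= xpair_eqE.
  apply/idP/idP => [/andP[/and3P[_ _ /eqP->] /eqP->]|/andP[/eqP-> /eqP->]].
    by rewrite !eqxx.
  by rewrite rv vr !eqxx.
- move=> v; rewrite verts_rev => vV.
  case: (eqVneq v r) => [->|vr]; first by exists 0; apply: walk_nil.
  have rv := reachV v vV vr; exists (f v).2; apply: walk_rev.
  exact: walkA (leqnn _) rv.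
Qed.

Lemma out_tree (V : finType) (G : {set V * V}) (r : V) :
  exists B : {set V * V}, [/\ B \subset G, out_arborescence B r &
    forall y b, walk_le G r y b -> y \in verts B r /\ walk_le B r y b].
Proof.
have [A [AG arb hw]] := in_tree (rev_edges G) r.
exists (rev_edges A); split => //.
- apply/subsetP => e; rewrite mem_rev_edges => /(subsetP AG).
  by rewrite mem_rev_edges; case: e.
- move=> y b /walk_rev /hw [yV w]; split; first by rewrite verts_rev.
  by have := walk_rev w.
Qed.

Fixpoint pedges (V : finType) (x : V) (p : seq V) : {set V * V} :=
  if p is z :: p' then (x, z) |: pedges z p' else set0.

Lemma pedges_sub (V : finType) (G : {set V * V}) x p :
  path (erel G) x p -> pedges x p \subset G.
Proof.
elim: p x => [|z p IH] x /=; first by rewrite sub0set.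
by move=> /andP[xz pz]; rewrite subUset sub1set -/(erel G x z) xz IH.
Qed.

Lemma pedges_card (V : finType) (x : V) p : #|pedges x p| <= size p.
Proof.
elim: p x => [|z p IH] x /=; first by rewrite cards0.
by rewrite cardsU1; have := IH z; case: (_ \notin _) => /=; lia.
Qed.

Lemma path_sub (V : finType) (G H : {set V * V}) x p :
  G \subset H -> path (erel G) x p -> path (erel H) x p.
Proof.
move=> /subsetP GH; elim: p x => [|z p IH] x //= /andP[xz pz].
by rewrite /erel (GH _ xz) IH.
Qed.

Lemma pedges_path (V : finType) (x : V) p : path (erel (pedges x p)) x p.
Proof.
elim: p x => [|z p IH] x //=.
rewrite /erel setU11 /=; apply: path_sub (IH z); exact: subsetUr.
Qed.

Lemma pedges_walk (V : finType) (x : V) p : walk_le (pedges x p) x (last x p) (size p).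
Proof. by exists p; split => //; apply: pedges_path. Qed.

Lemma walk_split (V : finType) (G : {set V * V}) x p v :
  path (erel G) x p -> v \in p ->
  exists a b, [/\ walk_le G x v a, walk_le G v (last x p) b & a + b = size p].
Proof.
elim: p x => [|z p IH] x //= /andP[xz pz]; rewrite inE => /orP[/eqP->|vp].
  exists 1, (size p); split.
  - exact: walk_cons xz (walk_nil _ _ _).
  - by exists p.
  - by rewrite add1n.
have [a [b [wa wb ab]]] := IH z pz vp.
exists a.+1, b; split => //; last by rewrite addSn ab.
exact: walk_cons xz wa.
Qed.

Lemma path_heads (V : finType) (G : {set V * V}) x p :
  path (erel G) x p -> {subset p <= [set e.2 | e in G]}.
Proof.
elim: p x => [|z p IH] x //= /andP[xz pz] v; rewrite inE => /orP[/eqP->|vp].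
  by apply/imsetP; exists (x, z).
exact: IH pz v vp.
Qed.

Lemma jt_at (V : finType) (E G : {set V * V}) (r : V) : G \subset E ->
  exists J : jtree V, [/\ is_junction_tree E J, #|jin J :|: jout J| <= #|G| &
    forall x y a b d, walk_le G x r a -> walk_le G r y b -> a + b <= d ->
      jconnects J x y d].
Proof.
move=> GE; have [A [AG arbA hA]] := in_tree G r.
have [B [BG arbB hB]] := out_tree G r.
exists (JTree r A B); split.
- by split => //=; apply: subset_trans GE.
- by apply: subset_leq_card; rewrite subUset AG BG.
- move=> x y a b d wx wy abd; have [xV wxA] := hA _ _ wx.
  have [yV wyB] := hB _ _ wy.
  by split => //=; exists a, b.
Qed.

Lemma jcost_cons (V : finType) (J : jtree V) sol :
  jcost (J :: sol) = #|jin J :|: jout J| + jcost sol.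
Proof. by rewrite /jcost big_cons. Qed.

Lemma light_seq (V : finType) (E F : {set V * V}) k (s t : 'I_k -> V) d
  (P : 'I_k -> seq V) : F \subset E ->
  (forall i, [/\ path (erel F) (s i) (P i), last (s i) (P i) = t i & size (P i) <= d i]) ->
  forall l : seq 'I_k, exists sol : seq (jtree V),
    [/\ forall J, List.In J sol -> is_junction_tree E J,
        forall i, i \in l -> exists J, List.In J sol /\ jconnects J (s i) (t i) (d i)
      & jcost sol <= \sum_(i <- l) size (P i)].
Proof.
move=> FE hP; elim=> [|i l [sol [h1 h2 h3]]].
  by exists [::]; split => //; rewrite /jcost !big_nil.
have [pp lp sp] := hP i.
have GE : pedges (s i) (P i) \subset E by apply: subset_trans (pedges_sub pp) FE.
have [J [jJ cJ cnJ]] := jt_at (s i) GE.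
exists (J :: sol); split.
- by move=> J' /= [<-|/h1].
- move=> j; rewrite inE => /orP[/eqP->|/h2 [J' [inJ' cJ']]]; last by exists J'; split => //; right.
  exists J; split; first by left.
  apply: (cnJ _ _ 0 (size (P i))); first exact: walk_nil.
    by rewrite -lp; apply: pedges_walk.
  by rewrite add0n.
- rewrite jcost_cons big_cons; apply: leq_add => //.
  exact: leq_trans cJ (pedges_card _ _).
Qed.

Lemma count_bound (V : finType) k (U : {set 'I_k}) (P : 'I_k -> seq V)
  (H : {set V}) q :
  (forall i, uniq (P i) /\ {subset P i <= H}) ->
  (forall v, #|[set i in U | v \in P i]| <= q) ->
  \sum_(i in U) size (P i) <= #|H| * q.
Proof.
move=> hP hq.
have e1 : forall i, size (P i) = \sum_(v in H) (v \in P i).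
  move=> i; have [u sub] := hP i.
  rewrite -(card_uniqP u) -sum1_card big_mkcond [RHS]big_mkcond /=.
  apply: eq_bigr => v _; case: (boolP (v \in P i)) => vp.
    by rewrite (sub _ vp).
  by case: (v \in H).
under eq_bigr => i _ do rewrite e1.
rewrite exchange_big /= -sum_nat_const; apply: leq_sum => v _.
apply: leq_trans (hq v); rewrite -sum1_card [X in _ <= X]big_mkcond /= big_mkcond /=.
apply: leq_sum => i _; rewrite !inE; case: (i \in U); case: (v \in P i) => //.
Qed.

Lemma main_nat (V : finType) (E F : {set V * V}) k (s t : 'I_k -> V) d q :
  0 < q -> k <= q * q -> spanner_feasible E s t d F ->
  exists sol : seq (jtree V), junction_solution E s t d sol /\ jcost sol <= 2 * q * #|F|.
Proof.
move=> q0 kq [FE hw].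
have hP0 : forall i, exists p : seq V,
    [/\ path (erel F) (s i) p, last (s i) p = t i, size p <= d i & uniq p].
  move=> i; have [p [pp lp sp]] := hw i.
  move: lp; case: (shortenP pp) => p' pp' up' sub' lp.
  exists p'; split => //; last by case/andP: up'.
  apply: leq_trans sp; apply: uniq_leq_size sub'; by case/andP: up'.
have [P hP] := fin_all_exists hP0.
pose H := [set e.2 | e in F].
have HF : #|H| <= #|F| by apply: leq_imset_card.
have hPu : forall i, uniq (P i) /\ {subset P i <= H}.
  by move=> i; have [pp _ _ u] := hP i; split => //; apply: path_heads pp.
have hP3 : forall i, [/\ path (erel F) (s i) (P i), last (s i) (P i) = t i & size (P i) <= d i].
  by move=> i; have [pp lp sp _] := hP i.
have light : forall U : {set 'I_k},
    ~~ [exists v, q <= #|[set i in U | v \in P i]|] ->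
    exists sol : seq (jtree V),
    [/\ forall J, List.In J sol -> is_junction_tree E J,
        forall i, i \in U -> exists J, List.In J sol /\ jconnects J (s i) (t i) (d i)
      & q * jcost sol <= #|U| * #|F| + q * q * #|F|].
  move=> U; rewrite negb_exists => /forallP hl.
  have [sol [h1 h2 h3]] := light_seq FE hP3 (enum U).
  exists sol; split => //; first by move=> i iU; apply: h2; rewrite mem_enum.
  rewrite big_enum /= in h3.
  have hq : forall v, #|[set i in U | v \in P i]| <= q.
    by move=> v; have := hl v; rewrite -ltnNge; apply: ltnW.
  have := count_bound hPu hq => hc.
  have c1 : jcost sol <= #|F| * q by apply: leq_trans h3 (leq_trans hc _); apply: leq_mul.
  have := leq_mul (leqnn q) c1; nia.
have claim : forall n (U : {set 'I_k}), #|U| <= n ->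
    exists sol : seq (jtree V),
    [/\ forall J, List.In J sol -> is_junction_tree E J,
        forall i, i \in U -> exists J, List.In J sol /\ jconnects J (s i) (t i) (d i)
      & q * jcost sol <= #|U| * #|F| + q * q * #|F|].
  elim=> [|n IH] U hU; (case: (boolP [exists v, q <= #|[set i in U | v \in P i]|]);
    last exact: light); move=> /existsP [v hv];
  (have WU : [set i in U | v \in P i] \subset U by apply/subsetP => i; rewrite inE => /andP[]);
  have cW := subset_leq_card WU.
    by have := leq_trans q0 (leq_trans hv (leq_trans cW hU)).
  set W := [set i in U | v \in P i] in hv WU cW *.
  have cU : #|W| + #|U :\: W| = #|U| by rewrite -(cardsID W U) (setIidPr WU).
  have [sol' [h1 h2 h3]] := IH (U :\: W) (ltac:(lia)).
  have [J [jJ cJ cnJ]] := jt_at v FE.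
  exists (J :: sol'); split.
  - by move=> J' /= [<-|/h1].
  - move=> i iU; case: (boolP (i \in W)) => iW.
    + exists J; split; first by left.
      have [pp lp sp _] := hP i.
      have vP : v \in P i by move: iW; rewrite inE => /andP[].
      have [a [b [wa wb ab]]] := walk_split pp vP.
      rewrite lp in wb; apply: cnJ wa wb _; by rewrite ab.
    + have iU' : i \in U :\: W by rewrite inE iW iU.
      have [J' [inJ' c']] := h2 i iU'; exists J'; split => //; by right.
  - rewrite jcost_cons mulnDr.
    have := leq_mul (leqnn q) cJ; have := leq_mul hv (leqnn (#|F|)).
    nia.
have hk : #|[set: 'I_k]| <= k by rewrite cardsT card_ord.
have [sol [h1 h2 h3]] := claim k [set: 'I_k] hk.
exists sol; split; first by split => // i; apply: h2; rewrite inE.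
rewrite cardsT card_ord in h3.
rewrite -(leq_pmul2l q0); apply: leq_trans h3 _.
have := leq_mul kq (leqnn (#|F|)); nia.
Qed.

Open Scope R_scope.
Lemma real_fin (q k f c : nat) : (q * q <= 4 * k)%N -> (c <= 2 * q * f)%N ->
  Rle (INR c) (Rmult (Rmult (IZR 4) (sqrt (INR k))) (INR f)).
Proof.
move=> q4 hc.
apply: (Rle_trans _ (INR (2 * q * f))); first by apply: le_INR; apply/leP.
have hq : INR q * INR q <= 4 * INR k.
  have := le_INR _ _ (leP q4); rewrite !mult_INR.
  by replace (INR 4) with 4 by (simpl; lra).
have sk := sqrt_sqrt (INR k) (pos_INR k).
have s0 := sqrt_pos (INR k).
have qp := pos_INR q.
have Fp := pos_INR f.
have hq2 : INR q <= 2 * sqrt (INR k) by nra.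
rewrite !mult_INR.
replace (INR 2) with 2 by (simpl; lra).
nra.
Qed.
Close Scope R_scope.

Theorem lemma4p2 :
  exists C : R, Rlt 0 C /\
  forall (V : finType) (E : {set V * V}) (k : nat)
         (s t : 'I_k -> V) (d : 'I_k -> nat),
    (forall i, walk_le E (s i) (t i) (d i)) ->
    forall F : {set V * V}, spanner_feasible E s t d F ->
    exists sol : seq (jtree V),
      junction_solution E s t d sol /\
      Rle (INR (jcost sol)) (Rmult (Rmult C (sqrt (INR k))) (INR #|F|)).
Proof.
exists (IZR 4); split; first by apply: IZR_lt.
move=> V E k s t d _ F hF.
case: (posnP k) => [k0 | kpos].
  subst k; exists [::]; split.
    by split => // -[].
  rewrite /jcost big_nil /= sqrt_0 Rmult_0_r Rmult_0_l; apply: Rle_refl.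
have ex : exists q, k <= q * q by exists k; nia.
case: (ex_minnP ex) => q kq qmin.
have q0 : 0 < q by rewrite lt0n; apply/eqP => qz; rewrite qz in kq; lia.
have q4 : q * q <= 4 * k.
  have h : (q - 1) * (q - 1) < k.
    by rewrite ltnNge; apply/negP => /qmin; lia.
  nia.
have [sol [hs hc]] := main_nat q0 kq hF.
exists sol; split => //.
exact: real_fin q4 hc.
Qed.
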